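(* The compact objects of $p\mathsf{Vec}_\mathbb{Q}$ are exactly the tame persistence modules of finite type.
   Context: $p\mathsf{Vec}_\mathbb{Q}$ is the category of functors from the poset $[0,\infty)$ to $\mathbb{Q}$-vector spaces (persistence modules). An object $X$ is compact if $\mathrm{Hom}(X,-)$ preserves filtered colimits. A persistence module $\mathbb{V}$ is of finite type if each $\mathbb{V}(t)$ is finite-dimensional. A finite sequence $t_0<\dots<t_n$ in $[0,\infty)$ discretizes $\mathbb{V}$ if $\mathbb{V}(s\le t)$ can fail to be an isomorphism only when $s<t_i\le t$ for some $i$; $\mathbb{V}$ is tame if it admits a discretization. *)

(* Defs.v *)
From HB Require Import structures.
From mathcomp Require Import all_boot all_order all_algebra.
From Stdlib Require Import Rdefinitions Raxioms Sorted.
Set Implicit Arguments. Unset Strict Implicit. Unset Printing Implicit Defensive.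
Import GRing.Theory.
Local Open Scope ring_scope.

Definition nnR := {x : R | Rle R0 x}.
Definition nnle (s t : nnR) : Prop := Rle (proj1_sig s) (proj1_sig t).

Record pmod := PMod {
  pobj :> nnR -> lmodType rat;
  pmap : forall s t : nnR, nnle s t -> pobj s -> pobj t;
  pmap_linear : forall s t (h : nnle s t), linear (pmap h);
  pmap_id : forall t (h : nnle t t) v, pmap h v = v;
  pmap_comp : forall s t u (hst : nnle s t) (htu : nnle t u) (hsu : nnle s u) v,
      pmap hsu v = pmap htu (pmap hst v) }.

Record pmor (V W : pmod) := PMor {
  mcomp :> forall t, V t -> W t;
  mcomp_linear : forall t, linear (@mcomp t);
  mcomp_nat : forall s t (h : nnle s t) v,
      @mcomp t (pmap h v) = pmap h (@mcomp s v) }.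
Arguments mcomp {V W} p t _ : rename.

Lemma linear_comp_aux (U V W : lmodType rat) (f : V -> W) (g : U -> V) :
  linear f -> linear g -> linear (fun x => f (g x)).
Proof. by move=> hf hg a u v /=; rewrite hg hf. Qed.

Lemma pcomp_nat (U V W : pmod) (f : pmor V W) (g : pmor U V) s t (h : nnle s t) v :
  f t (g t (pmap h v)) = pmap h (f s (g s v)).
Proof. by rewrite !mcomp_nat. Qed.

Definition pcomp (U V W : pmod) (f : pmor V W) (g : pmor U V) : pmor U W :=
  @PMor U W (fun t x => f t (g t x))
    (fun t => linear_comp_aux (@mcomp_linear _ _ f t) (@mcomp_linear _ _ g t))
    (pcomp_nat f g).

Record cat := Cat {
  ob : Type;
  hom : ob -> ob -> Type;
  cid : forall i, hom i i;
  ccomp : forall i j k, hom j k -> hom i j -> hom i k;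
  ccomp_id_l : forall i j (u : hom i j), ccomp (cid j) u = u;
  ccomp_id_r : forall i j (u : hom i j), ccomp u (cid i) = u;
  ccomp_assoc : forall i j k l (u : hom i j) (v : hom j k) (w : hom k l),
      ccomp w (ccomp v u) = ccomp (ccomp w v) u }.

Definition filtered (C : cat) : Prop :=
  inhabited (ob C) /\
  (forall i j : ob C, exists k (u : hom i k) (v : hom j k), True) /\
  (forall (i j : ob C) (u v : hom i j),
      exists k (w : hom j k), ccomp w u = ccomp w v).

Record diagram (C : cat) := Diagram {
  dob : ob C -> pmod;
  dmap : forall i j, hom i j -> pmor (dob i) (dob j);
  dmap_id : forall i t x, dmap (cid i) t x = x;
  dmap_comp : forall i j k (u : hom i j) (w : hom j k) t x,
      dmap (ccomp w u) t x = dmap w t (dmap u t x) }.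

Definition is_cocone (C : cat) (D : diagram C) (L : pmod)
    (iota : forall i, pmor (dob D i) L) : Prop :=
  forall i j (u : hom i j) t x, iota j t (dmap D u t x) = iota i t x.

Definition is_colimit (C : cat) (D : diagram C) (L : pmod)
    (iota : forall i, pmor (dob D i) L) : Prop :=
  @is_cocone C D L iota /\
  forall (M : pmod) (kappa : forall i, pmor (dob D i) M), @is_cocone C D M kappa ->
    exists m : pmor L M,
      (forall i t x, m t (iota i t x) = kappa i t x) /\
      (forall m' : pmor L M, (forall i t x, m' t (iota i t x) = kappa i t x) ->
         forall t y, m' t y = m t y).

(** Colimits in Set (Type) of the diagram i |-> Hom(X, D i), with cocone
    g |-> iota_i o g into Hom(X, L). *)
Definition hom_cocone_is_colimit (X : pmod) (C : cat) (D : diagram C) (L : pmod)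
    (iota : forall i, pmor (dob D i) L) : Prop :=
  (forall i j (u : hom i j) (g : pmor X (dob D i)),
      pcomp (iota j) (pcomp (dmap D u) g) = pcomp (iota i) g) /\
  forall (Z : Type) (c : forall i, pmor X (dob D i) -> Z),
    (forall i j (u : hom i j) (g : pmor X (dob D i)), c j (pcomp (dmap D u) g) = c i g) ->
    exists h : pmor X L -> Z,
      (forall i (g : pmor X (dob D i)), h (pcomp (iota i) g) = c i g) /\
      (forall h' : pmor X L -> Z,
         (forall i (g : pmor X (dob D i)), h' (pcomp (iota i) g) = c i g) ->
         forall f, h' f = h f).

Definition compact (X : pmod) : Prop :=
  forall (C : cat) (D : diagram C), filtered C ->
  forall (L : pmod) (iota : forall i, pmor (dob D i) L),
    @is_colimit C D L iota -> @hom_cocone_is_colimit X C D L iota.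

Definition findim (V : lmodType rat) : Prop :=
  exists s : seq V, forall v : V,
    exists c : 'I_(size s) -> rat, v = (\sum_(i < size s) c i *: s`_i)%R.

Definition finite_type (V : pmod) : Prop := forall t, findim (V t).

Definition discretizes (ts : list R) (V : pmod) : Prop :=
  ts <> nil /\ List.Forall (fun x => Rle R0 x) ts /\ Sorted Rlt ts /\
  forall (s t : nnR) (h : nnle s t), ~ bijective (@pmap V s t h) ->
    exists ti, List.In ti ts /\ Rlt (proj1_sig s) ti /\ Rle ti (proj1_sig t).

Definition tame (V : pmod) : Prop := exists ts : list R, discretizes ts V.

(* Main.v *)
Require Import Defs.
From mathcomp Require Import all_boot all_algebra.
From HB Require Import structures.
From mathcomp Require Import all_boot all_order all_algebra.
From mathcomp Require Import boolp.
From Stdlib Require Import Reals Lra Sorted List ClassicalEpsilon ProofIrrelevance.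
Set Implicit Arguments. Unset Strict Implicit. Unset Printing Implicit Defensive.
Import GRing.Theory.
Import Defs.
Import GRing.LinearExports.

Module MP1.

Lemma pmor_eq (V W : pmod) (f g : pmor V W) : (forall t x, f t x = g t x) -> f = g.
Proof.
case: f => f fl fn; case: g => g gl gn /= H.
have E : f = g.
  apply: functional_extensionality_dep => t; apply: functional_extensionality_dep => x; exact: H.
subst g. by rewrite (proof_irrelevance _ fl gl) (proof_irrelevance _ fn gn).
Qed.

Definition pid (X : pmod) : pmor X X.
Proof. by refine (@PMor X X (fun t x => x) _ _). Defined.

Lemma bij_inv1 (A B C : Type) (f : A -> B) (g : B -> C) :
  bijective (g \o f) -> bijective f -> bijective g.
Proof.
case=> h gh hg [f' ff' f'f]; exists (f \o h) => y /=.
  by rewrite -{1}(f'f y) /=; have := gh (f' y) => /= ->.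
exact: hg.
Qed.

Lemma bij_inv2 (A B C : Type) (f : A -> B) (g : B -> C) :
  bijective (g \o f) -> bijective g -> bijective f.
Proof.
case=> h gh hg [g' gg' g'g]; exists (h \o g) => y /=; first exact: gh.
have E := hg (g y); rewrite /= in E.
by rewrite -[LHS]gg' E gg'.
Qed.

Section PB.
Variable X : pmod.
Lemma pbij_left (s t u : nnR) (hst : nnle s t) (htu : nnle t u) (hsu : nnle s u) :
  bijective (@pmap X _ _ hsu) -> bijective (@pmap X _ _ hst) -> bijective (@pmap X _ _ htu).
Proof.
move=> b1 b2; apply: (@bij_inv1 _ _ _ (pmap hst)) => //.
exact: (eq_bij b1 (fun v => pmap_comp hst htu hsu v)).
Qed.
Lemma pbij_right (s t u : nnR) (hst : nnle s t) (htu : nnle t u) (hsu : nnle s u) :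
  bijective (@pmap X _ _ hsu) -> bijective (@pmap X _ _ htu) -> bijective (@pmap X _ _ hst).
Proof.
move=> b1 b2; apply: (@bij_inv2 _ _ _ _ (pmap htu)) => //.
exact: (eq_bij b1 (fun v => pmap_comp hst htu hsu v)).
Qed.
Lemma pbij_both (s t u : nnR) (hst : nnle s t) (htu : nnle t u) (hsu : nnle s u) :
  bijective (@pmap X _ _ hst) -> bijective (@pmap X _ _ htu) -> bijective (@pmap X _ _ hsu).
Proof.
move=> b1 b2; have b := bij_comp b2 b1.
exact: (eq_bij b (fun v => esym (pmap_comp hst htu hsu v))).
Qed.
Lemma pbij_irr (s t : nnR) (h h' : nnle s t) :
  bijective (@pmap X _ _ h) -> bijective (@pmap X _ _ h').
Proof. by rewrite (proof_irrelevance _ h h'). Qed.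
End PB.

Lemma compact_factor (X : pmod) (C : cat) (D : diagram C) (L : pmod)
  (iota : forall i, pmor (dob D i) L) : compact X -> filtered C -> @is_colimit C D L iota ->
  forall f : pmor X L, exists i (g : pmor X (dob D i)), forall t x, iota i t (g t x) = f t x.
Proof.
move=> cX fC cL f; have [_ H] := cX C D fC L iota cL.
have [h [_ hu]] := H Prop (fun _ _ => True) (fun _ _ _ _ => erefl).
have e1 := hu (fun f => exists i g, f = pcomp (iota i) g).
have e2 := hu (fun _ => True) (fun _ _ => erefl).
have H1 : forall i (g : pmor X (dob D i)), (exists i' g', pcomp (iota i) g = pcomp (iota i') g') = True.
  move=> i g; apply: propext; split => // _; by exists i, g.
have : (exists i g, f = pcomp (iota i) g).
  have E := e1 H1 f; have E2 := e2 f; simpl in E, E2; rewrite E -E2 //.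
case=> i [g ->]; by exists i, g.
Qed.

Section Poset.
Variables (I : Type) (le : I -> I -> Prop).
Hypotheses (lerefl : forall i, le i i) (letr : forall i j k, le i j -> le j k -> le i k).
Definition pcat : cat.
Proof.
refine (@Cat I le lerefl (fun i j k (v : le j k) (u : le i j) => letr u v) _ _ _);
  by move=> *; apply: proof_irrelevance.
Defined.
Lemma pcat_filtered : inhabited I -> (forall i j, exists k, le i k /\ le j k) -> filtered pcat.
Proof.
move=> inh dir; split => //; split.
  by move=> i j; have [k [u v]] := dir i j; exists k, u, v.
by move=> i j u v; exists j, (lerefl j); apply: (proof_irrelevance (le i j)).
Qed.
End Poset.

End MP1.
Import MP1.

Module MP2.

Lemma nnle_trans (s t u : nnR) : nnle s t -> nnle t u -> nnle s u.
Proof. rewrite /nnle; lra. Qed.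
Lemma nnle_refl (s : nnR) : nnle s s.
Proof. rewrite /nnle; lra. Qed.

Lemma pmap_pi (X : pmod) (s t : nnR) (h h' : nnle s t) (v : X s) : pmap h v = pmap h' v.
Proof. by rewrite (proof_irrelevance _ h h'). Qed.
Lemma pmap_cc (X : pmod) (s t u : nnR) (hst : nnle s t) (htu : nnle t u) (hsu : nnle s u) (v : X s) :
  pmap htu (pmap hst v) = pmap hsu v.
Proof. by rewrite (pmap_comp hst htu hsu). Qed.

Lemma pmap_sq (X : pmod) (s t1 t2 u : nnR) (h1 : nnle s t1) (h2 : nnle t1 u) (h3 : nnle s t2)
  (h4 : nnle t2 u) (v : X s) : pmap h2 (pmap h1 v) = pmap h4 (pmap h3 v).
Proof. by rewrite (pmap_cc h1 h2 (nnle_trans h1 h2)) (pmap_cc h3 h4 (nnle_trans h1 h2)). Qed.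
Lemma pmap_c1 (X : pmod) (s t u : nnR) (h1 : nnle s t) (h2 : nnle t u) (h3 : nnle s u) (v : X s) :
  pmap h2 (pmap h1 v) = pmap h3 v.
Proof. exact: pmap_cc. Qed.

Lemma pmap_ct (X : pmod) (s t u : nnR) (h1 : nnle s t) (h2 : nnle t u) (v : X s) :
  pmap h2 (pmap h1 v) = pmap (nnle_trans h1 h2) v.
Proof. exact: pmap_cc. Qed.

Section Reindex.
Variable X : pmod.
Variable I : Type.
Variable a : I -> nnR.
Variable B : I -> R -> Prop.
Hypothesis Bdown : forall i s t, B i t -> (s <= t)%R -> B i s.
Definition rle (i j : I) := nnle (a i) (a j) /\ forall s, B j s -> B i s.
Lemma rle_refl i : rle i i. Proof. split=> //; exact: nnle_refl. Qed.
Lemma rle_trans i j k : rle i j -> rle j k -> rle i k.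
Proof. move=> [h1 h2] [h3 h4]; split; [exact: nnle_trans h1 h3|auto]. Qed.

Definition rr (i : I) (s : nnR) : nnR :=
  if excluded_middle_informative (nnle (a i) s /\ B i (proj1_sig s)) then a i else s.

Lemma rr_le i s : nnle (rr i s) s.
Proof. rewrite /rr; destruct (excluded_middle_informative _) as [[]|]=> //; exact: nnle_refl. Qed.

Lemma rr_mono i s t : nnle s t -> nnle (rr i s) (rr i t).
Proof.
rewrite /rr => hst.
destruct (excluded_middle_informative (nnle (a i) s /\ B i (proj1_sig s))) as [[h1 h2]|h1];
destruct (excluded_middle_informative (nnle (a i) t /\ B i (proj1_sig t))) as [[h3 h4]|h3];
rewrite /nnle /= in hst h1 h3 *; try lra.
- case: (Rle_dec (proj1_sig (a i)) (proj1_sig s)) => h5; last lra.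
  exfalso; apply: h1; split => //; exact: Bdown h4 hst.
Qed.

Lemma rr_ij i j : rle i j -> forall s, nnle (rr i s) (rr j s).
Proof.
move=> [hij hB] s; rewrite /rr.
destruct (excluded_middle_informative (nnle (a i) s /\ B i (proj1_sig s))) as [[h1 h2]|h1];
destruct (excluded_middle_informative (nnle (a j) s /\ B j (proj1_sig s))) as [[h3 h4]|h3];
rewrite /nnle /= in hij h1 h3 *; try lra.
- exfalso; apply: h1; split; [rewrite /nnle in hij h3 *; lra | exact: hB].
Qed.

Lemma rr_in i s : nnle (a i) s -> B i (proj1_sig s) -> nnle (rr i s) (a i).
Proof.
move=> h1 h2; rewrite /rr.
destruct (excluded_middle_informative (nnle (a i) s /\ B i (proj1_sig s))) as [hh|h3].
  exact: nnle_refl.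
by case: h3.
Qed.

Lemma rr_cover i s : (nnle (a i) s -> B i (proj1_sig s) -> nnle s (a i)) -> nnle s (rr i s).
Proof.
move=> H; rewrite /rr.
destruct (excluded_middle_informative (nnle (a i) s /\ B i (proj1_sig s))) as [[h1 h2]|h3].
  exact: H.
exact: nnle_refl.
Qed.

Definition rX (i : I) : pmod.
Proof.
refine (@PMod (fun t => X (rr i t)) (fun s t h => pmap (rr_mono i h)) _ _ _).
- by move=> s t h; apply: pmap_linear.
- by move=> t h v; apply: pmap_id.
- by move=> s t u hst htu hsu v; apply: pmap_comp.
Defined.

Definition rmap (i j : I) (u : rle i j) : pmor (rX i) (rX j).
Proof.
refine (@PMor (rX i) (rX j) (fun t => @pmap X _ _ (rr_ij u t)) _ _).
- move=> t; exact: (@pmap_linear X _ _ (rr_ij u t)).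
- by move=> s t h v /=; apply: pmap_sq.
Defined.

Definition rcat := pcat rle_refl rle_trans.

Definition rdiag : diagram rcat.
Proof.
refine (@Diagram rcat rX rmap _ _).
- by move=> i t x /=; apply: pmap_id.
- by move=> i j k u w t x /=; symmetry; apply: pmap_c1.
Defined.

Definition riota (i : I) : pmor (rX i) X.
Proof.
refine (@PMor (rX i) X (fun t => @pmap X _ _ (rr_le i t)) _ _).
- move=> t; exact: (@pmap_linear X _ _ (rr_le i t)).
- by move=> s t h v /=; apply: pmap_sq.
Defined.

Hypothesis inh : inhabited I.
Hypothesis dir : forall i j, exists k, rle i k /\ rle j k.
Hypothesis cover : forall s, exists i, nnle s (rr i s).

Lemma rcolim : @is_colimit rcat rdiag X riota.
Proof.
split.
  by move=> i j u t x /=; apply: pmap_c1.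
move=> M kap hk.
have K : forall i j t (w : nnR) (z : X w) (h1 : nnle w (rr i t)) (h2 : nnle w (rr j t)),
    kap i t (pmap h1 z) = kap j t (pmap h2 z).
  move=> i j t w z h1 h2; have [k [u v]] := dir i j.
  rewrite -(hk i k u t) -(hk j k v t) /=.
  rewrite (pmap_cc h1 (rr_ij u t) (nnle_trans h1 (rr_ij u t))).
  rewrite (pmap_cc h2 (rr_ij v t) (nnle_trans h2 (rr_ij v t))).
  by rewrite (pmap_pi (nnle_trans h1 (rr_ij u t)) (nnle_trans h2 (rr_ij v t))).
pose ci t := proj1_sig (constructive_indefinite_description _ (cover t)).
have cip : forall t, nnle t (rr (ci t) t) := fun t => proj2_sig (constructive_indefinite_description _ (cover t)).
pose m0 t (x : X t) := kap (ci t) t (pmap (cip t) x).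
have m0lin : forall t, linear (m0 t).
  by move=> t c x y; rewrite /m0 pmap_linear mcomp_linear.
have m0nat : forall s t (h : nnle s t) v, m0 t (pmap h v) = pmap h (m0 s v).
  move=> s t h v; rewrite /m0 -mcomp_nat /= !pmap_ct; exact: K.
exists (PMor m0lin m0nat); split.
  move=> i t x /=; rewrite /m0 pmap_ct.
  by rewrite (K _ i t _ x _ (nnle_refl _)) pmap_id.
move=> m' hm' t y /=.
rewrite /m0 -hm' /=; congr (m' t _).
by rewrite pmap_ct pmap_id.
Qed.

Lemma reindex_bij : compact X ->
  exists i, forall s (h : nnle (a i) s), B i (proj1_sig s) -> bijective (@pmap X _ _ h).
Proof.
move=> cX.
have fC : filtered rcat by apply: pcat_filtered.
have [i [g hg]] := compact_factor cX fC rcolim (pid X).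
exists i => s h hB.
have hrs := rr_in h hB.
have hra : nnle (rr i (a i)) (rr i s) := rr_mono i h.
exists (fun y => pmap hrs (g s y)).
- move=> x; rewrite (mcomp_nat g h x) /= pmap_ct.
  rewrite (pmap_pi _ (rr_le i (a i))); exact: hg.
- move=> y; rewrite pmap_ct (pmap_pi _ (rr_le i s)); exact: hg.
Qed.
End Reindex.

End MP2.
Import MP2.

Module MP3.
Local Open Scope R_scope.

Definition mknn (x : R) (h : 0 <= x) : nnR := exist _ x h.

Section Loc.
Variable X : pmod.
Hypothesis cX : compact X.

Lemma loc_right (p : nnR) : exists e, 0 < e /\
  forall (s t : nnR) (h : nnle s t), proj1_sig p <= proj1_sig s -> proj1_sig t < proj1_sig p + e ->
  bijective (@pmap X _ _ h).
Proof.
pose I := {e : R | 0 < e}.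
pose a := fun _ : I => p.
pose B := fun (e : I) (x : R) => x < proj1_sig p + proj1_sig e.
have Bd : forall i s t, B i t -> s <= t -> B i s by rewrite /B => *; lra.
have inh : inhabited I by constructor; exists 1; lra.
have dir : forall i j, exists k, rle a B i k /\ rle a B j k.
  move=> [e1 h1] [e2 h2].
  have hk : 0 < Rmin e1 e2 by apply: Rmin_glb_lt.
  exists (exist _ _ hk); rewrite /rle /a /B /=; split; split; try exact: nnle_refl;
    move=> x; have := Rmin_l e1 e2; have := Rmin_r e1 e2; lra.
have cov : forall s, exists i, nnle s (rr a B i s).
  move=> s; case: (Rle_dec (proj1_sig s) (proj1_sig p)) => hs.
    have h1 : 0 < 1 by lra.
    exists (exist _ 1 h1); apply: rr_cover => //=.
  have h1 : 0 < proj1_sig s - proj1_sig p by lra.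
  exists (exist _ _ h1); apply: rr_cover => //= _; rewrite /B /=; lra.
have [[e he] He] := reindex_bij Bd inh dir cov cX.
exists e; split => // s t h hps hte.
have hps' : nnle p s by [].
have hpt : nnle p t by rewrite /nnle; rewrite /nnle in h; lra.
apply: (@pbij_left X _ _ _ hps' h hpt).
  by apply: He; rewrite /B /=; lra.
by apply: He; rewrite /B /=; rewrite /nnle in h; lra.
Qed.

Lemma loc_left (p : nnR) : exists e, 0 < e /\
  forall (s t : nnR) (h : nnle s t), proj1_sig p - e <= proj1_sig s -> proj1_sig t < proj1_sig p ->
  bijective (@pmap X _ _ h).
Proof.
pose I := {e : R | 0 < e}.
pose a := fun e : I => mknn (Rmax_l 0 (proj1_sig p - proj1_sig e)).
pose B := fun (e : I) (x : R) => x < proj1_sig p.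
have Bd : forall i s t, B i t -> s <= t -> B i s by rewrite /B => *; lra.
have inh : inhabited I by constructor; exists 1; lra.
have dir : forall i j, exists k, rle a B i k /\ rle a B j k.
  move=> [e1 h1] [e2 h2].
  have hk : 0 < Rmin e1 e2 by apply: Rmin_glb_lt.
  exists (exist _ _ hk); rewrite /rle /a /B /nnle /=; split; split => //;
    have := Rmin_l e1 e2; have := Rmin_r e1 e2; move=> *;
    apply: Rmax_lub; try apply: Rmax_l;
    (apply: Rle_trans; last apply: Rmax_r); lra.
have cov : forall s, exists i, nnle s (rr a B i s).
  move=> s; case: (Rle_dec (proj1_sig p) (proj1_sig s)) => hs.
    have h1 : 0 < 1 by lra.
    exists (exist _ 1 h1); apply: rr_cover => //= _; rewrite /B /=; lra.
  have h1 : 0 < proj1_sig p - proj1_sig s by lra.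
  exists (exist _ _ h1); apply: rr_cover => //= _ _; rewrite /nnle /=.
  apply: Rle_trans; last apply: Rmax_r; lra.
have [[e he] He] := reindex_bij Bd inh dir cov cX.
exists e; split => // s t h hps hte.
have s0 := proj2_sig s.
have hps' : nnle (a (exist _ e he)) s.
  rewrite /nnle /=; apply: Rmax_lub => //; lra.
have hpt : nnle (a (exist _ e he)) t by apply: nnle_trans hps' h.
apply: (@pbij_left X _ _ _ hps' h hpt).
  by apply: He; rewrite /B /=; lra.
by apply: He; rewrite /B /=; rewrite /nnle in h; lra.
Qed.

Lemma loc_inf : exists N : nnR,
  forall (s t : nnR) (h : nnle s t), proj1_sig N <= proj1_sig s -> bijective (@pmap X _ _ h).
Proof.
pose I := nnR.
pose a := fun N : I => N.
pose B := fun (N : I) (x : R) => True.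
have Bd : forall i s t, B i t -> s <= t -> B i s by [].
have inh : inhabited I by constructor; exists 0; lra.
have dir : forall i j, exists k, rle a B i k /\ rle a B j k.
  move=> i j; exists (mknn (Rle_trans _ _ _ (proj2_sig i) (Rmax_l (proj1_sig i) (proj1_sig j)))).
  by rewrite /rle /a /nnle /=; split; split => //; [apply: Rmax_l|apply: Rmax_r].
have cov : forall s, exists i, nnle s (rr a B i s).
  by move=> s; exists s; apply: rr_cover => // *; exact: nnle_refl.
have [N HN] := reindex_bij Bd inh dir cov cX.
exists N => s t h hs.
have h1 : nnle N s by [].
have h2 : nnle N t by apply: nnle_trans h1 h.
by apply: (@pbij_left X _ _ _ h1 h h2); apply: HN.
Qed.
End Loc.

End MP3.
Import MP3.

Module MP4.
Local Open Scope R_scope.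

Lemma sorted_snoc (l : list R) x : Sorted Rlt l -> List.Forall (fun y => y < x) l ->
  Sorted Rlt (l ++ x :: nil).
Proof.
elim: l => [|y l IH] /= hs hf; first by constructor.
have [hs1 hd] := Sorted_inv hs.
constructor; first exact: IH hs1 (Forall_inv_tail hf).
move: hd; case: l {IH hs hs1 hf} (Forall_inv hf) => [|z l] /= hyx hd; constructor => //.
exact: HdRel_inv hd.
Qed.

Section Tame.
Variable X : pmod.
Hypothesis cX : compact X.

Definition Aset (u : R) : Prop := exists ts : list R, Sorted Rlt ts /\
  List.Forall (fun x => 0 <= x < u) ts /\
  forall (s t : nnR) (h : nnle s t), proj1_sig t < u -> ~ bijective (@pmap X _ _ h) ->
  exists ti, List.In ti ts /\ proj1_sig s < ti <= proj1_sig t.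

Lemma Aset0 : Aset 0.
Proof.
exists nil; split; first constructor; split; first constructor.
move=> s t h ht; have := proj2_sig t; lra.
Qed.

Lemma Aset_unbounded : ~ bound Aset.
Proof.
move=> hb; have [sig [hub hlub]] := @completeness Aset hb (ex_intro _ 0 Aset0).
have s0 : 0 <= sig by apply: hub; exact: Aset0.
have [e [he [HL HR]]] : exists e, 0 < e /\
   (forall (s t : nnR) (h : nnle s t), sig - e <= proj1_sig s -> proj1_sig t < sig ->
     bijective (@pmap X _ _ h)) /\
   (forall (s t : nnR) (h : nnle s t), sig <= proj1_sig s -> proj1_sig t < sig + e ->
     bijective (@pmap X _ _ h)).
  have [e1 [he1 H1]] := loc_left cX (mknn s0).
  have [e2 [he2 H2]] := loc_right cX (mknn s0).
  exists (Rmin e1 e2); split; first exact: Rmin_glb_lt.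
  have := Rmin_l e1 e2; have := Rmin_r e1 e2; move=> m1 m2.
  split=> s t h h1 h2; [apply: H1|apply: H2] => /=; lra.
have [b [Ab hb2]] : exists b, Aset b /\ sig - e / 2 < b.
  apply: NNPP => hn.
  have : sig <= sig - e / 2.
    apply: hlub => x Ax; apply: Rnot_lt_le => hx; apply: hn; by exists x.
  lra.
have hbs : b <= sig by apply: hub.
case: Ab => ts [srt [fa disc]].
have : sig + e / 2 <= sig; last lra.
apply: hub; exists (ts ++ sig :: nil); split; [|split].
- apply: sorted_snoc => //; apply: Forall_impl fa => x /=; lra.
- apply/Forall_app; split; first by apply: Forall_impl fa => x /=; lra.
  constructor; last constructor; lra.
- move=> s t h ht hnb.
  have s0' := proj2_sig s; have hst : proj1_sig s <= proj1_sig t := h.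
  have wit : proj1_sig s < sig <= proj1_sig t -> exists ti, List.In ti (ts ++ sig :: nil) /\
      proj1_sig s < ti <= proj1_sig t.
    by move=> hh; exists sig; split => //; apply/in_or_app; right; left.
  case: (Rlt_le_dec (proj1_sig t) b) => htb.
    have [ti [hi hti]] := disc s t h htb hnb.
    by exists ti; split => //; apply/in_or_app; left.
  case: (Rlt_le_dec (proj1_sig s) (sig - e / 2)) => hsm.
    have m0 : 0 <= sig - e / 2 by lra.
    pose m := mknn m0.
    have hsm' : nnle s m by rewrite /nnle /=; lra.
    have hmt : nnle m t by rewrite /nnle /=; lra.
    case: (classic (bijective (@pmap X _ _ hsm'))) => bsm.
      have bmt : ~ bijective (@pmap X _ _ hmt).
        by move=> bmt; apply: hnb; apply: (@pbij_both X _ _ _ hsm' hmt h).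
      case: (Rlt_le_dec (proj1_sig t) sig) => hts.
        by exfalso; apply: bmt; apply: HL => /=; lra.
      apply: wit; lra.
    have [ti [hi hti]] := disc s m hsm' ltac:(rewrite /=; lra) bsm.
    by exists ti; split; [apply/in_or_app; left|rewrite /= in hti; lra].
  case: (Rlt_le_dec (proj1_sig t) sig) => hts.
    by exfalso; apply: hnb; apply: HL => //; lra.
  case: (Rlt_le_dec (proj1_sig s) sig) => hss.
    apply: wit; lra.
  by exfalso; apply: hnb; apply: HR => //; lra.
Qed.

Lemma compact_tame : tame X.
Proof.
have [N HN] := loc_inf cX.
have [u [Au hu]] : exists u, Aset u /\ proj1_sig N < u.
  apply: NNPP => hn; apply: Aset_unbounded; exists (proj1_sig N) => x Ax.
  apply: Rnot_lt_le => hx; apply: hn; by exists x.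
case: Au => ts [srt [fa disc]].
have Hin : forall x, List.In x ts -> List.In x (match ts with nil => 0 :: nil | _ => ts end).
  by case: ts {srt fa disc}.
exists (match ts with nil => 0 :: nil | _ => ts end); split; [|split; [|split]].
- by case: ts {srt fa disc Hin}.
- move: fa; case: ts {srt disc Hin} => [|y l] fa.
    constructor; [lra|constructor].
  by apply: Forall_impl fa => x /=; lra.
- move: srt; case: ts {fa disc Hin} => [|y l] srt //.
  constructor; constructor.
- move=> s t h hnb.
  case: (Rlt_le_dec (proj1_sig t) u) => htu.
    have [ti [hi hti]] := disc s t h htu hnb.
    by exists ti; split => //; apply: Hin.
  case: (Rle_lt_dec (proj1_sig N) (proj1_sig s)) => hsN.
    by exfalso; apply: hnb; apply: HN.
  have hsN' : nnle s N by rewrite /nnle; lra.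
  have hNt : nnle N t by rewrite /nnle; lra.
  have bNt := HN N t hNt (Rle_refl _).
  have bsN : ~ bijective (@pmap X _ _ hsN').
    by move=> b; apply: hnb; apply: (@pbij_both X _ _ _ hsN' hNt h).
  have [ti [hi hti]] := disc s N hsN' hu bsN.
  by exists ti; split; [apply: Hin|have := proj2_sig N; lra].
Qed.
End Tame.

End MP4.
Import MP4.

Module MP5.
Local Open Scope ring_scope.

Record lmodOps (T : Type) := LmodOps {
  oz : T; oadd : T -> T -> T; oopp : T -> T; oscl : rat -> T -> T;
  oaddA : associative oadd; oaddC : commutative oadd; oadd0 : left_id oz oadd;
  oaddN : left_inverse oz oopp oadd;
  osclA : forall a b v, oscl a (oscl b v) = oscl (a * b) v;
  oscl1 : left_id 1 oscl;
  osclDr : right_distributive oscl oadd;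
  osclDl : forall v, {morph oscl^~ v : a b / a + b >-> oadd a b} }.

Definition mkT (T : Type) (o : lmodOps T) : Type := T.
HB.instance Definition _ T o := gen_eqMixin (@mkT T o).
HB.instance Definition _ T o := gen_choiceMixin (@mkT T o).
HB.instance Definition _ T o := GRing.isZmodule.Build (@mkT T o) (@oaddA T o) (@oaddC T o) (@oadd0 T o) (@oaddN T o).
HB.instance Definition _ T o := GRing.Zmodule_isLmodule.Build rat (@mkT T o) (@osclA T o) (@oscl1 T o) (@osclDr T o) (@osclDl T o).
Definition mkL (T : Type) (o : lmodOps T) : lmodType rat := @mkT T o.

Lemma sval_inj (A : Type) (P : A -> Prop) (x y : {a | P a}) : proj1_sig x = proj1_sig y -> x = y.
Proof. case: x => x hx; case: y => y hy /= E; subst y; congr exist; exact: proof_irrelevance. Qed.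

Lemma lin_add (U V : lmodType rat) (f : U -> V) : linear f -> forall x y, f (x + y) = f x + f y.
Proof. by move=> hf x y; rewrite -[x in LHS]scale1r hf scale1r. Qed.
Lemma lin_0 (U V : lmodType rat) (f : U -> V) : linear f -> f 0 = 0.
Proof. move=> hf; have h := lin_add hf 0 0; rewrite addr0 in h.
by apply: (@addrI _ (f 0)); rewrite addr0 -h. Qed.
Lemma lin_scale (U V : lmodType rat) (f : U -> V) : linear f -> forall a x, f (a *: x) = a *: f x.
Proof. by move=> hf a x; rewrite -[a *: x]addr0 hf lin_0 // addr0. Qed.

Record subsp (V : lmodType rat) := SubSp {
  sp :> V -> Prop; sp0 : sp 0; spD : forall x y, sp x -> sp y -> sp (x + y);
  spZ : forall a x, sp x -> sp (a *: x) }.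

Section Sub.
Variables (V : lmodType rat) (S : subsp V).
Definition subT := {x : V | S x}.
Definition sub0 : subT := exist _ 0 (sp0 S).
Definition subadd (x y : subT) : subT := exist _ _ (spD (proj2_sig x) (proj2_sig y)).
Definition subscl a (x : subT) : subT := exist _ _ (spZ a (proj2_sig x)).
Definition subopp (x : subT) : subT := subscl (-1) x.
Definition subOps : lmodOps subT.
Proof.
refine (@LmodOps subT sub0 subadd subopp subscl _ _ _ _ _ _ _ _);
  repeat move=> ?; apply: sval_inj => /=.
- exact: addrA.
- exact: addrC.
- exact: add0r.
- by rewrite scaleN1r addNr.
- exact: scalerA.
- exact: scale1r.
- exact: scalerDr.
- exact: scalerDl.
Defined.
Definition SubL : lmodType rat := mkL subOps.
Lemma SubL_add (x y : SubL) : proj1_sig (x + y : SubL) = proj1_sig x + proj1_sig y. Proof. by []. Qed.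
Lemma SubL_scl a (x : SubL) : proj1_sig (a *: x : SubL) = a *: proj1_sig x. Proof. by []. Qed.
End Sub.

Inductive inspan (V : lmodType rat) (G : V -> Prop) : V -> Prop :=
| isp0 : inspan G 0
| ispG x : G x -> inspan G x
| ispD x y : inspan G x -> inspan G y -> inspan G (x + y)
| ispZ a x : inspan G x -> inspan G (a *: x).

Definition spanS (V : lmodType rat) (G : V -> Prop) : subsp V :=
  @SubSp V (inspan G) (@isp0 V G) (@ispD V G) (@ispZ V G).

Lemma inspan_map (U V : lmodType rat) (G : U -> Prop) (G' : V -> Prop) (f : U -> V) :
  linear f -> (forall x, G x -> G' (f x)) -> forall y, inspan G y -> inspan G' (f y).
Proof.
move=> hf hG y; elim => {y} [|x gx|x y _ ihx _ ihy|a x _ ihx].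
- rewrite lin_0 //; exact: isp0.
- exact/ispG/hG.
- rewrite lin_add //; exact: ispD.
- rewrite lin_scale //; exact: ispZ.
Qed.

Lemma inspan_mono (V : lmodType rat) (G G' : V -> Prop) :
  (forall x, G x -> G' x) -> forall y, inspan G y -> inspan G' y.
Proof.
move=> hG y; elim => {y} [|x gx|x y _ ihx _ ihy|a x _ ihx].
- exact: isp0.
- exact/ispG/hG.
- exact: ispD.
- exact: ispZ.
Qed.

Lemma nthE (A : Type) (l : list A) d n : seq.nth d l n = List.nth n l d.
Proof. by elim: l n => [|x l IH] [|n] //=. Qed.

Section FT.
Variable X : pmod.
Definition gens := list {t : nnR & X t}.
Definition Gl (l : gens) (s : nnR) (y : X s) : Prop :=
  exists τ x (h : nnle τ s), List.In (existT _ τ x) l /\ y = pmap h x.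
Definition Dsp (l : gens) (s : nnR) : subsp (X s) := spanS (@Gl l s).
Definition DL (l : gens) (s : nnR) : lmodType rat := SubL (Dsp l s).

Lemma Gl_map l s t (h : nnle s t) y : Gl l y -> Gl l (pmap h y).
Proof.
case=> τ [x [h' [hi ->]]]; exists τ, x, (nnle_trans h' h); split => //.
exact: pmap_ct.
Qed.

Definition Dmap l s t (h : nnle s t) (z : DL l s) : DL l t :=
  exist _ (pmap h (proj1_sig z)) (inspan_map (pmap_linear h) (@Gl_map l s t h) (proj2_sig z)).

Definition Dpm (l : gens) : pmod.
Proof.
refine (@PMod (DL l) (@Dmap l) _ _ _).
- move=> s t h c x y; apply: sval_inj; exact: (pmap_linear h c (sval x) (sval y)).
- move=> t h v; apply: sval_inj => /=; exact: pmap_id.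
- move=> s t u hst htu hsu v; apply: sval_inj => /=; exact: pmap_comp.
Defined.

Definition incl_ord (l l' : gens) := forall e, List.In e l -> List.In e l'.
Lemma incl_refl l : incl_ord l l. Proof. by []. Qed.
Lemma incl_tr l1 l2 l3 : incl_ord l1 l2 -> incl_ord l2 l3 -> incl_ord l1 l3.
Proof. by move=> h1 h2 e /h1 /h2. Qed.

Lemma Gl_mono l l' s y : incl_ord l l' -> @Gl l s y -> @Gl l' s y.
Proof. by move=> u [τ [x [h [hi ->]]]]; exists τ, x, h; split => //; apply: u. Qed.

Definition Dinc (l l' : gens) (u : incl_ord l l') : pmor (Dpm l) (Dpm l').
Proof.
refine (@PMor (Dpm l) (Dpm l') (fun s z => exist _ (proj1_sig z)
   (inspan_mono (fun y => @Gl_mono l l' s y u) (proj2_sig z))) _ _).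
- by move=> t c x y; apply: sval_inj.
- by move=> s t h v; apply: sval_inj.
Defined.

Definition Fcat := pcat incl_refl incl_tr.

Definition Fdiag : diagram Fcat.
Proof.
refine (@Diagram Fcat Dpm Dinc _ _).
- by move=> i t x; apply: sval_inj.
- by move=> i j k u w t x; apply: sval_inj.
Defined.

Definition Fiota (l : gens) : pmor (Dpm l) X.
Proof.
refine (@PMor (Dpm l) X (fun s z => proj1_sig z) _ _).
- by move=> t c x y.
- by move=> s t h v.
Defined.

Lemma gen_self (s : nnR) (y : X s) : @Gl (existT _ s y :: nil) s y.
Proof. exists s, y, (nnle_refl s); split; first by left. by rewrite pmap_id. Qed.

Definition e0 (s : nnR) (y : X s) : Dpm (existT _ s y :: nil) s :=
  exist _ y (ispG (gen_self y)).

Lemma Fcolim : @is_colimit Fcat Fdiag X Fiota.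
Proof.
split; first by [].
move=> M kap hk.
have K : forall l l' s (z : Dpm l s) (z' : Dpm l' s), proj1_sig z = proj1_sig z' ->
    kap l s z = kap l' s z'.
  move=> l l' s z z' E.
  have u : incl_ord l (l ++ l') by move=> e he; apply: in_or_app; left.
  have v : incl_ord l' (l ++ l') by move=> e he; apply: in_or_app; right.
  rewrite -(hk l (l ++ l') u s z) -(hk l' (l ++ l') v s z'); congr (kap _ s _).
  exact: sval_inj.
pose m0 s (y : X s) := kap _ s (e0 y).
have m0lin : forall s, linear (m0 s).
  move=> s c x y.
  pose l : gens := existT _ s x :: existT _ s y :: nil.
  have g1 : @Gl l s x by exists s, x, (nnle_refl s); split; [left|rewrite pmap_id].
  have g2 : @Gl l s y by exists s, y, (nnle_refl s); split; [right; left|rewrite pmap_id].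
  pose z1 : Dpm l s := exist _ x (ispG g1).
  pose z2 : Dpm l s := exist _ y (ispG g2).
  rewrite /m0 (K _ l s _ (c *: z1 + z2)) //.
  by rewrite mcomp_linear (K _ _ s z1 (e0 x)) // (K _ _ s z2 (e0 y)).
have m0nat : forall s t (h : nnle s t) v, m0 t (pmap h v) = pmap h (m0 s v).
  move=> s t h v; rewrite /m0 -mcomp_nat; exact: K.
exists (PMor m0lin m0nat); split.
  by move=> l t x /=; rewrite /m0; apply: K.
move=> m' hm' t y /=.
by rewrite /m0 -hm'.
Qed.

Lemma compact_ft : compact X -> finite_type X.
Proof.
move=> cX t.
have fC : filtered Fcat.
  apply: pcat_filtered; first exact: (inhabits nil).
  move=> i j; exists (i ++ j); split => e he; apply: in_or_app; [left|right] => //.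
have [l [g hg]] := compact_factor cX fC Fcolim (pid X).
pose f (e : {t : nnR & X t}) : X t :=
  match excluded_middle_informative (nnle (projT1 e) t) with
  | left h => pmap h (projT2 e) | right _ => 0 end.
pose sq : list (X t) := map f l.
exists sq => v.
have : inspan (@Gl l t) v by have := proj2_sig (g t v); have := hg t v; rewrite /= => ->.
elim => {v} [|x gx|x y _ [c1 ->] _ [c2 ->]|a x _ [c ->]].
- exists (fun _ => 0); rewrite big1 // => i _; exact: scale0r.
- case: gx => τ [x0 [h [hi ->]]].
  have [n [hn hnth]] := In_nth l (existT _ τ x0) (existT _ τ x0) hi.
  have hn' : (n < size sq)%nat by rewrite size_map; apply/ltP.
  exists (fun i => if nat_of_ord i == n then 1 else 0).
  rewrite (bigD1 (Ordinal hn')) //= eqxx scale1r big1 ?addr0.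
    rewrite (nth_map (existT _ τ x0)); last by apply/ltP.
    rewrite nthE hnth /f /=.
    case: excluded_middle_informative => h' //; first by rewrite (pmap_pi h' h).
  move=> i; rewrite -val_eqE /= => /negbTE ->; exact: scale0r.
- exists (fun i => c1 i + c2 i); rewrite -big_split /=; apply: eq_bigr => i _.
  by rewrite scalerDl.
- exists (fun i => a * c i); rewrite scaler_sumr; apply: eq_bigr => i _.
  by rewrite scalerA.
Qed.
End FT.

End MP5.
Import MP5.

Module MP6.
Local Open Scope ring_scope.

Section Germ.
Variables (C : cat) (D : diagram C).
Hypothesis fC : filtered C.

Definition dm (i j : ob C) (u : hom i j) (t : nnR) (x : dob D i t) : dob D j t := dmap D u t x.
Arguments dm [i j] u t x.

Lemma fdir (i j : ob C) : exists k (u : hom i k) (v : hom j k), True.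
Proof. by case: fC => _ [H _]; apply: H. Qed.
Lemma feq (i j : ob C) (u v : hom i j) : exists k (w : hom j k), ccomp w u = ccomp w v.
Proof. by case: fC => _ [_ H]; apply: H. Qed.
Lemma merge (i k k' : ob C) (u : hom i k) (u' : hom i k') :
  exists k'' (w : hom k k'') (w' : hom k' k''), ccomp w u = ccomp w' u'.
Proof.
have [k1 [a [b _]]] := fdir k k'.
have [k2 [c Ec]] := feq (ccomp a u) (ccomp b u').
exists k2, (ccomp c a), (ccomp c b); by rewrite -!ccomp_assoc.
Qed.

Lemma dm_lin (i j : ob C) (u : hom i j) t : linear (@dm i j u t).
Proof. exact: mcomp_linear. Qed.
Lemma dm_add (i j : ob C) (u : hom i j) t x y : dm u t (x + y) = dm u t x + dm u t y.
Proof. exact: lin_add (@dm_lin i j u t) x y. Qed.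
Lemma dm_scale (i j : ob C) (u : hom i j) t c x : dm u t (c *: x) = c *: dm u t x.
Proof. exact: lin_scale (@dm_lin i j u t) c x. Qed.
Lemma dm_0 (i j : ob C) (u : hom i j) t : dm u t 0 = 0.
Proof. exact: lin_0 (@dm_lin i j u t). Qed.
Lemma dm_comp (i j k : ob C) (u : hom i j) (w : hom j k) t x : dm (ccomp w u) t x = dm w t (dm u t x).
Proof. exact: dmap_comp. Qed.
Lemma dm_id (i : ob C) t x : dm (cid i) t x = x.
Proof. exact: dmap_id. Qed.
Lemma dm_nat (i j : ob C) (u : hom i j) s t (h : nnle s t) x : dm u t (pmap h x) = pmap h (dm u s x).
Proof. exact: mcomp_nat. Qed.

Definition eqv t (i : ob C) (x : dob D i t) (j : ob C) (y : dob D j t) :=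
  exists k (u : hom i k) (v : hom j k), dm u t x = dm v t y.

Lemma eqv_refl t i x : @eqv t i x i x.
Proof. by exists i, (cid i), (cid i). Qed.
Lemma eqv_sym t i x j y : @eqv t i x j y -> @eqv t j y i x.
Proof. by case=> k [u [v E]]; exists k, v, u. Qed.
Lemma eqv_trans t i x j y l z : @eqv t i x j y -> @eqv t j y l z -> @eqv t i x l z.
Proof.
case=> k [u [v E]] [k' [v' [w' E']]].
have [k'' [a [b Eab]]] := merge v v'.
exists k'', (ccomp a u), (ccomp b w').
by rewrite !dm_comp E -dm_comp Eab dm_comp E' -dm_comp.
Qed.
Lemma eqv_push t i x k (u : hom i k) : @eqv t i x k (dm u t x).
Proof. by exists k, u, (cid k); rewrite dm_id. Qed.

Lemma eqv_univ t i x j y : @eqv t i x j y -> forall k (u : hom i k) (v : hom j k),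
  exists k' (w : hom k k'), dm w t (dm u t x) = dm w t (dm v t y).
Proof.
case=> k0 [u0 [v0 E]] k u v.
have [k1 [a [b _]]] := fdir k k0.
have [k2 [c Ec]] := feq (ccomp a u) (ccomp b u0).
have [k3 [d Ed]] := feq (ccomp c (ccomp a v)) (ccomp c (ccomp b v0)).
exists k3, (ccomp d (ccomp c a)).
have E1 : dm (ccomp d (ccomp c a)) t (dm u t x) = dm d t (dm c t (dm b t (dm u0 t x))).
  by rewrite -!dm_comp -!ccomp_assoc Ec.
have E2 : dm (ccomp d (ccomp c a)) t (dm v t y) = dm d t (dm c t (dm b t (dm v0 t y))).
  by rewrite -!dm_comp -!ccomp_assoc Ed.
by rewrite E1 E2 E.
Qed.

Lemma eqv_add t i x i' x' j y j' y' : @eqv t i x i' x' -> @eqv t j y j' y' ->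
  forall k (u : hom i k) (v : hom j k) k' (u' : hom i' k') (v' : hom j' k'),
  @eqv t k (dm u t x + dm v t y) k' (dm u' t x' + dm v' t y').
Proof.
move=> hx hy k u v k' u' v'.
have [m [a [b _]]] := fdir k k'.
have [m1 [w1 E1]] := eqv_univ hx (ccomp a u) (ccomp b u').
have [m2 [w2 E2]] := eqv_univ hy (ccomp w1 (ccomp a v)) (ccomp w1 (ccomp b v')).
exists m2, (ccomp w2 (ccomp w1 a)), (ccomp w2 (ccomp w1 b)).
rewrite !dm_comp in E1 E2; rewrite !dm_add !dm_comp E1 E2 //.
Qed.

Lemma eqv_scale t i x j y c : @eqv t i x j y -> @eqv t i (c *: x) j (c *: y).
Proof. by case=> k [u [v E]]; exists k, u, v; rewrite !dm_scale E. Qed.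

Lemma eqv_0 t i j : @eqv t i 0 j 0.
Proof. have [k [u [v _]]] := fdir i j; by exists k, u, v; rewrite !dm_0. Qed.

Lemma eqv_pmap s t (h : nnle s t) i x j y : @eqv s i x j y -> @eqv t i (pmap h x) j (pmap h y).
Proof. by case=> k [u [v E]]; exists k, u, v; rewrite !dm_nat E. Qed.

Definition cls t i (x : dob D i t) : forall k, dob D k t -> Prop := fun k z => @eqv t i x k z.
Definition Germ t := {F : forall k, dob D k t -> Prop | exists i x, F = @cls t i x}.
Definition gcls t i (x : dob D i t) : Germ t := exist _ (cls x) (ex_intro _ i (ex_intro _ x erefl)).

Lemma gcls_eq t i x j y : @eqv t i x j y -> @gcls t i x = @gcls t j y.
Proof.
move=> E; apply: sval_inj => /=.
apply: functional_extensionality_dep => k; apply: functional_extensionality_dep => z.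
apply: propext; split => H; [exact: eqv_trans (eqv_sym E) H|exact: eqv_trans E H].
Qed.
Lemma gcls_eqv t i x j y : @gcls t i x = @gcls t j y -> @eqv t i x j y.
Proof.
move=> E; have E' := f_equal (fun F => proj1_sig F j y) E; simpl in E'.
rewrite /cls in E'; rewrite E'; exact: eqv_refl.
Qed.
Lemma gsurj t (F : Germ t) : exists p : {i : ob C & dob D i t}, F = gcls (projT2 p).
Proof.
case: F => F [i [x E]]; exists (existT _ i x); apply: sval_inj => /=; exact: E.
Qed.
Definition grep t (F : Germ t) : {i : ob C & dob D i t} := proj1_sig (constructive_indefinite_description _ (gsurj F)).
Lemma grep_spec t (F : Germ t) : F = gcls (projT2 (grep F)).
Proof. exact: (proj2_sig (constructive_indefinite_description _ (gsurj F))). Qed.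
Lemma grep_eqv t i x : @eqv t i x _ (projT2 (grep (gcls x))).
Proof. apply: gcls_eqv; exact: grep_spec. Qed.

Definition cosp (i j : ob C) : {k : ob C & (hom i k * hom j k)%type}.
Proof.
have H : exists p : {k : ob C & (hom i k * hom j k)%type}, True.
  by have [k [u [v _]]] := fdir i j; exists (existT _ k (u, v)).
exact: proj1_sig (constructive_indefinite_description _ H).
Defined.

Definition obj0 : ob C := epsilon (proj1 fC) (fun _ => True).

Definition gadd t (F G : Germ t) : Germ t :=
  let p := grep F in let q := grep G in let c := cosp (projT1 p) (projT1 q) in
  gcls (dm (projT2 c).1 t (projT2 p) + dm (projT2 c).2 t (projT2 q)).
Definition gscl t (a : rat) (F : Germ t) : Germ t := gcls (a *: projT2 (grep F)).
Definition gzero t : Germ t := @gcls t obj0 0.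
Definition gopp t (F : Germ t) : Germ t := gscl (-1) F.

Lemma gadd_cls t i x j y k (u : hom i k) (v : hom j k) :
  gadd (@gcls t i x) (@gcls t j y) = gcls (dm u t x + dm v t y).
Proof. apply: gcls_eq; apply: eqv_add; apply: eqv_sym; exact: grep_eqv. Qed.
Lemma gadd_same t k (a b : dob D k t) : gadd (gcls a) (gcls b) = gcls (a + b).
Proof. by rewrite (gadd_cls _ _ (cid k) (cid k)) !dm_id. Qed.
Lemma gscl_cls t i x c : gscl c (@gcls t i x) = gcls (c *: x).
Proof. apply: gcls_eq; apply: eqv_scale; apply: eqv_sym; exact: grep_eqv. Qed.
Lemma gzero_cls t i : gzero t = @gcls t i 0.
Proof. apply: gcls_eq; exact: eqv_0. Qed.
Lemma gpush t i x k (u : hom i k) : @gcls t i x = gcls (dm u t x).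
Proof. apply: gcls_eq; exact: eqv_push. Qed.

Lemma gcommon2 t (F G : Germ t) : exists k (a b : dob D k t), F = gcls a /\ G = gcls b.
Proof.
rewrite (grep_spec F) (grep_spec G).
case: (grep F) => i x; case: (grep G) => j y /=.
have [k [u [v _]]] := fdir i j.
by exists k, (dm u t x), (dm v t y); rewrite -!gpush.
Qed.
Lemma gcommon3 t (F G H : Germ t) : exists k (a b c : dob D k t), F = gcls a /\ G = gcls b /\ H = gcls c.
Proof.
have [k [a [b [-> ->]]]] := gcommon2 F G.
rewrite (grep_spec H); case: (grep H) => j y /=.
have [m [u [v _]]] := fdir k j.
by exists m, (dm u t a), (dm u t b), (dm v t y); rewrite -!gpush.
Qed.

Definition gops t : lmodOps (Germ t).
Proof.
refine (@LmodOps (Germ t) (gzero t) (@gadd t) (@gopp t) (@gscl t) _ _ _ _ _ _ _ _).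
- move=> F G H; have [k [a [b [c [-> [-> ->]]]]]] := gcommon3 F G H.
  by rewrite !gadd_same addrA.
- move=> F G; have [k [a [b [-> ->]]]] := gcommon2 F G.
  by rewrite !gadd_same addrC.
- move=> F; rewrite (grep_spec F); case: (grep F) => i x /=.
  by rewrite (gzero_cls t i) gadd_same add0r.
- move=> F; rewrite (grep_spec F); case: (grep F) => i x /=.
  by rewrite /gopp gscl_cls gadd_same scaleN1r addNr -gzero_cls.
- move=> a b F; rewrite (grep_spec F); case: (grep F) => i x /=.
  by rewrite !gscl_cls scalerA.
- move=> F; rewrite (grep_spec F); case: (grep F) => i x /=.
  by rewrite !gscl_cls scale1r.
- move=> a F G; have [k [x [y [-> ->]]]] := gcommon2 F G.
  by rewrite [in LHS]gadd_same !gscl_cls gadd_same scalerDr.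
- move=> F a b; rewrite (grep_spec F); case: (grep F) => i x /=.
  by rewrite !gscl_cls gadd_same scalerDl.
Defined.

Definition GL t : lmodType rat := mkL (gops t).
Lemma GL_add t (F G : GL t) : F + G = gadd F G. Proof. by []. Qed.
Lemma GL_scl t a (F : GL t) : a *: F = gscl a F. Proof. by []. Qed.

Definition gpm s t (h : nnle s t) (F : GL s) : GL t := gcls (pmap h (projT2 (grep F))).
Lemma gpm_cls s t (h : nnle s t) i x : gpm h (@gcls s i x) = gcls (pmap h x).
Proof. apply: gcls_eq; apply: eqv_pmap; apply: eqv_sym; exact: grep_eqv. Qed.

Definition Lc : pmod.
Proof.
refine (@PMod GL gpm _ _ _).
- move=> s t h c F G; rewrite !GL_add !GL_scl.
  have [k [x [y [-> ->]]]] := gcommon2 F G.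
  by rewrite (@gscl_cls s k x c) gadd_same !gpm_cls gscl_cls gadd_same pmap_linear.
- move=> t h F; rewrite (grep_spec F); case: (grep F) => i x /=.
  by rewrite gpm_cls pmap_id.
- move=> s t u hst htu hsu F; rewrite (grep_spec F); case: (grep F) => i x /=.
  by rewrite !gpm_cls (pmap_comp hst htu).
Defined.

Definition kap (i : ob C) : pmor (dob D i) Lc.
Proof.
refine (@PMor (dob D i) Lc (fun t x => @gcls t i x) _ _).
- move=> t c x y /=; by rewrite GL_add GL_scl gscl_cls gadd_same.
- move=> s t h x /=; by rewrite gpm_cls.
Defined.

Lemma kap_cocone : @is_cocone C D Lc kap.
Proof. move=> i j u t x /=; symmetry; exact: gpush. Qed.

Section WithL.
Variables (L : pmod) (iota : forall i, pmor (dob D i) L).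
Hypothesis cL : @is_colimit C D L iota.

Lemma iota_eqv t i x j y : @eqv t i x j y -> iota i t x = iota j t y.
Proof. case: cL => hc _; case=> k [u [v E]]; by rewrite -(hc i k u) -(hc j k v) -/(dm u t x) E. Qed.

Definition n0 t (F : GL t) : L t := iota (projT1 (grep F)) t (projT2 (grep F)).
Lemma n0_cls t i x : n0 (@gcls t i x) = iota i t x.
Proof. rewrite /n0; symmetry; apply: iota_eqv; exact: grep_eqv. Qed.

Definition nmor : pmor Lc L.
Proof.
refine (@PMor Lc L n0 _ _).
- move=> t c F G; rewrite GL_add GL_scl.
  have [k [x [y [-> ->]]]] := gcommon2 F G.
  by rewrite gscl_cls gadd_same !n0_cls mcomp_linear.
- move=> s t h F; rewrite (grep_spec F); case: (grep F) => i x /=.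
  by rewrite gpm_cls !n0_cls mcomp_nat.
Defined.

Lemma colim_P1 t (y : L t) : exists i x, iota i t x = y.
Proof.
case: cL => hc hu.
have [m [hm _]] := hu Lc kap kap_cocone.
have [m1 [_ hm1]] := hu L iota hc.
have e1 := hm1 (pcomp nmor m) ltac:(move=> i t' x /=; rewrite hm /=; exact: n0_cls).
have e2 := hm1 (pid L) ltac:(by []).
have E : n0 (m t y) = y by have := e1 t y; rewrite -e2.
rewrite (grep_spec (m t y)) in E; rewrite n0_cls in E.
by exists (projT1 (grep (m t y))), (projT2 (grep (m t y))).
Qed.

Lemma colim_P2 t i x j y : iota i t x = iota j t y -> @eqv t i x j y.
Proof.
case: cL => hc hu.
have [m [hm _]] := hu Lc kap kap_cocone.
move=> E; apply: gcls_eqv.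
have E1 := hm i t x; have E2 := hm j t y; simpl in E1, E2.
by rewrite -E1 -E2 E.
Qed.
End WithL.
End Germ.

End MP6.
Import MP6.

Module MP7.
Local Open Scope ring_scope.

Lemma lin_sum (U W : lmodType rat) (f : U -> W) (hf : linear f) n (F : 'I_n -> U) :
  f (\sum_(i < n) F i) = \sum_(i < n) f (F i).
Proof.
elim: n F => [|n IH] F; first by rewrite !big_ord0 lin_0.
by rewrite !big_ord_recr /= lin_add // IH.
Qed.

Section LC.
Variable V : lmodType rat.
Definition lc (s : seq.seq V) (c : nat -> rat) : V := \sum_(i < size s) c i *: s`_i.

Lemma lc_nil c : lc [::] c = 0. Proof. by rewrite /lc big_ord0. Qed.
Lemma lc_cons x s c : lc (x :: s) c = c 0%N *: x + lc s (fun n => c n.+1).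
Proof. by rewrite /lc /= big_ord_recl. Qed.
Lemma lc_add s c d : lc s (fun n => c n + d n) = lc s c + lc s d.
Proof. by rewrite /lc -big_split; apply: eq_bigr => i _; rewrite scalerDl. Qed.
Lemma lc_scale s a c : lc s (fun n => a * c n) = a *: lc s c.
Proof. by rewrite /lc scaler_sumr; apply: eq_bigr => i _; rewrite scalerA. Qed.
Lemma lc_ext s c d : (forall n, (n < size s)%nat -> c n = d n) -> lc s c = lc s d.
Proof. by move=> H; rewrite /lc; apply: eq_bigr => i _; rewrite H. Qed.
Lemma lc_zero s : lc s (fun _ => 0) = 0.
Proof. by rewrite /lc big1 // => i _; rewrite scale0r. Qed.

Lemma lin_lc (W : lmodType rat) (f : V -> W) (hf : linear f) s c :
  f (lc s c) = \sum_(i < size s) c i *: f s`_i.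
Proof. by rewrite /lc lin_sum //; apply: eq_bigr => i _; rewrite lin_scale. Qed.

Definition lfree (s : seq.seq V) := forall c, lc s c = 0 -> forall n, (n < size s)%nat -> c n = 0.
Definition lspans (s : seq.seq V) := forall v, exists c, v = lc s c.

Lemma basis_sub (s : seq.seq V) : exists b, lfree b /\ forall c, exists d, lc s c = lc b d.
Proof.
elim: s => [|x s [b [fb sb]]].
  exists [::]; split; first by move=> c _ n.
  by move=> c; exists c.
case: (classic (exists d, x = lc b d)) => [[d hd]|hx].
  exists b; split => // c.
  have [d' hd'] := sb (fun n => c n.+1).
  exists (fun n => c 0%N * d n + d' n).
  by rewrite lc_cons lc_add lc_scale -hd -hd'.
exists (x :: b); split.
  move=> c; rewrite lc_cons => hc.
  have c0 : c 0%N = 0.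
    apply: contrapT => hne; apply: hx.
    exists (fun n => - (c 0%N)^-1 * c n.+1).
    rewrite lc_scale; apply: (@scalerI _ _ (c 0%N)) => //; first by apply/negP => /eqP.
    rewrite scalerA mulrN mulfV; last by apply/negP => /eqP.
    by rewrite scaleN1r; apply/eqP; rewrite -addr_eq0; apply/eqP.
  rewrite c0 scale0r add0r in hc.
  by case=> [|n] //= hn; apply: (fb _ hc).
move=> c; have [d hd] := sb (fun n => c n.+1).
exists (fun n => if n is n'.+1 then d n' else c 0%N).
by rewrite !lc_cons hd.
Qed.

Lemma basis_exists (s : seq.seq V) : lspans s -> exists b, lfree b /\ lspans b.
Proof.
move=> hs; have [b [fb sb]] := basis_sub s; exists b; split => // v.
have [c ->] := hs v; exact: sb.
Qed.

Lemma lc_uniq b c d : lfree b -> lc b c = lc b d -> forall n, (n < size b)%nat -> c n = d n.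
Proof.
move=> fb E n hn; apply/eqP; rewrite -subr_eq0; apply/eqP.
apply: (fb (fun n => c n - d n)) => //.
have hN : lc b (fun n => - d n) = - lc b d.
  by rewrite -scaleN1r -lc_scale; apply: lc_ext => m _; rewrite mulN1r.
by rewrite (lc_add b c (fun n => - d n)) hN E subrr.
Qed.

Definition coord (b : seq.seq V) (v : V) : nat -> rat := epsilon (inhabits (fun _ => 0)) (fun c => v = lc b c).
Lemma coord_spec b v : lspans b -> v = lc b (coord b v).
Proof. by move=> sb; rewrite /coord; exact: (epsilon_spec _ (fun c => v = lc b c) (sb v)). Qed.

Lemma coord_lin b a v w : lfree b -> lspans b -> forall n, (n < size b)%nat ->
  coord b (a *: v + w) n = a * coord b v n + coord b w n.
Proof.
move=> fb sb; apply: lc_uniq => //.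
by rewrite -coord_spec // lc_add lc_scale -!coord_spec.
Qed.

Definition bmap (W : lmodType rat) (b : seq.seq V) (ys : nat -> W) (v : V) : W :=
  \sum_(i < size b) coord b v i *: ys i.

Lemma bmap_lin (W : lmodType rat) b (ys : nat -> W) : lfree b -> lspans b -> linear (bmap b ys).
Proof.
move=> fb sb a v w; rewrite /bmap scaler_sumr -big_split; apply: eq_bigr => i _.
by rewrite coord_lin // scalerDl scalerA.
Qed.

Lemma lin_agree (W : lmodType rat) (f1 f2 : V -> W) b : linear f1 -> linear f2 -> lspans b ->
  (forall n, (n < size b)%nat -> f1 b`_n = f2 b`_n) -> forall v, f1 v = f2 v.
Proof.
move=> h1 h2 sb H v; have [c ->] := sb v.
rewrite !lin_lc //; apply: eq_bigr => i _; by rewrite H.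
Qed.

Lemma bmap_post (W W' : lmodType rat) b (ys : nat -> W) (k : W -> W') (f : V -> W') :
  lfree b -> lspans b -> linear k -> linear f ->
  (forall n, (n < size b)%nat -> k (ys n) = f b`_n) -> forall v, k (bmap b ys v) = f v.
Proof.
move=> fb sb hk hf H v; rewrite /bmap lin_sum //.
rewrite [in RHS](coord_spec v sb) lin_lc //; apply: eq_bigr => i _.
by rewrite lin_scale // H.
Qed.
End LC.

End MP7.
Import MP7.

Module MP8.
Local Open Scope ring_scope.

Lemma In_iota (n m : nat) : (n < m)%nat -> List.In n (iota 0 m).
Proof.
have : n \in iota 0 m -> List.In n (iota 0 m).
  elim: (iota 0 m) => [|x s IH] //; rewrite seq.in_cons => /orP [/eqP ->|/IH]; [left|right] => //.
by move=> H1 H2; apply: H1; rewrite mem_iota.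
Qed.

Section Main.
Variables (C : cat) (D : diagram C).
Hypothesis fC : filtered C.
Variables (L : pmod) (io : forall i, pmor (dob D i) L).
Hypothesis cL : @is_colimit C D L io.

Lemma io_dm i j (u : hom i j) t x : io j t (dm (D:=D) u x) = io i t x.
Proof. by case: cL => hc _; apply: hc. Qed.

Lemma fin_up (A : Type) (Q : A -> ob C -> Prop) (l : list A) :
  (forall a i j (u : hom i j), Q a i -> Q a j) -> (forall a, List.In a l -> exists i, Q a i) ->
  exists i, forall a, List.In a l -> Q a i.
Proof.
move=> up; elim: l => [|a l IH] H.
  by case: fC => [[i0] _]; exists i0.
have [i Hi] := IH (fun b hb => H b (or_intror hb)).
have [j Hj] := H a (or_introl erefl).
have [k [u [v _]]] := fdir fC i j.
exists k => b [<-|hb]; [exact: up Hj|exact: up (Hi b hb)].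
Qed.

Lemma fin_eq (A : Type) (i : ob C) (Q : A -> forall k, hom i k -> Prop) (l : list A) :
  (forall a k k' (u : hom i k) (w : hom k k'), Q a k u -> Q a k' (ccomp w u)) ->
  (forall a, List.In a l -> exists k (u : hom i k), Q a k u) ->
  exists k (u : hom i k), forall a, List.In a l -> Q a k u.
Proof.
move=> up; elim: l => [|a l IH] H.
  by exists i, (cid i).
have [k [u Hu]] := IH (fun b hb => H b (or_intror hb)).
have [k' [u' Hu']] := H a (or_introl erefl).
have [k'' [w [w' E]]] := merge fC u u'.
exists k'', (ccomp w u) => b [<-|hb].
  rewrite E; exact: up Hu'.
exact: up (Hu b hb).
Qed.

Lemma eq_later (i : ob C) t (x y : dob D i t) : io i t x = io i t y ->
  exists k (u : hom i k), dm (D:=D) u x = dm (D:=D) u y.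
Proof.
move=> E; have [k [u [v Euv]]] := colim_P2 fC cL E.
have [m [w Ew]] := feq fC u v.
exists m, (ccomp w u).
by rewrite (dm_comp (D:=D) u w) Euv -dm_comp -Ew.
Qed.

Section WithX.
Variable X : pmod.
Hypothesis tX : tame X.
Hypothesis fX : finite_type X.

Lemma bas_ex (p : nnR) : exists b : seq.seq (X p), lfree b /\ lspans b.
Proof.
have [s hs] := fX p; apply: (@basis_exists _ s) => v; have [c ->] := hs v.
exists (fun n => match @insub nat (fun n => (n < size s)%nat) _ n with Some i => c i | None => 0 end).
rewrite /lc; apply: eq_bigr => i _; by rewrite valK.
Qed.
Definition bas (p : nnR) : seq.seq (X p) := proj1_sig (constructive_indefinite_description _ (bas_ex p)).
Lemma bas_free p : lfree (bas p).
Proof. exact: (proj1 (proj2_sig (constructive_indefinite_description _ (bas_ex p)))). Qed.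
Lemma bas_span p : lspans (bas p).
Proof. exact: (proj2 (proj2_sig (constructive_indefinite_description _ (bas_ex p)))). Qed.

Lemma list_max (l : list nnR) (t : nnR) : (exists q, List.In q l /\ nnle q t) ->
  exists p, List.In p l /\ nnle p t /\ forall q, List.In q l -> nnle q t -> nnle q p.
Proof.
elim: l => [[q [[]]]|a l IH] H.
case: (classic (exists q, List.In q l /\ nnle q t)) => [Hl|Hl].
  have [p [hp [hpt hmax]]] := IH Hl.
  case: (Rle_dec (proj1_sig a) (proj1_sig p)) => hap.
    exists p; split; [right|split] => // q [<-|hq] hqt //; exact: hmax.
  case: (Rle_dec (proj1_sig a) (proj1_sig t)) => hat.
    exists a; split; [left|split] => // q [<-|hq] hqt; first exact: nnle_refl.
    have := hmax q hq hqt; rewrite /nnle; lra.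
  exists p; split; [right|split] => // q [<-|hq] hqt //; exact: hmax.
exists a; case: H => q [[<-|hq] hqt]; last by case: Hl; exists q.
split; [left|split] => // q' [<-|hq'] hq't; first exact: nnle_refl.
by case: Hl; exists q'.
Qed.

Lemma Ps_ex : exists Ps : list nnR, (exists p0, List.In p0 Ps /\ proj1_sig p0 = 0%R) /\
  (forall x, List.In x (proj1_sig (constructive_indefinite_description _ tX)) ->
     exists p, List.In p Ps /\ proj1_sig p = x) /\
  forall (s t : nnR) (h : nnle s t), ~ bijective (@pmap X _ _ h) ->
    exists p, List.In p Ps /\ (proj1_sig s < proj1_sig p)%R /\ nnle p t.
Proof.
set ts := proj1_sig _; have [_ [fa [_ disc]]] := proj2_sig (constructive_indefinite_description _ tX).
rewrite -/ts in fa disc.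
have [Ps [h0 h1]] : exists Ps : list nnR, (exists p0, List.In p0 Ps /\ proj1_sig p0 = 0%R) /\
  (forall x, List.In x ts -> exists p, List.In p Ps /\ proj1_sig p = x).
  elim: ts fa {disc} => [|x l IH] fa.
    have h0 : (0 <= 0)%R by lra.
    by exists (mknn h0 :: nil); split => //; exists (mknn h0); split => //; left.
  have [Ps [[p0 [hp0 e0]] hP]] := IH (Forall_inv_tail fa).
  exists (mknn (Forall_inv fa) :: Ps); split; first by exists p0; split => //; right.
  move=> y [<-|hy]; first by exists (mknn (Forall_inv fa)); split => //; left.
  by have [p [hp ep]] := hP y hy; exists p; split => //; right.
exists Ps; split => //; split => // s t h hnb.
have [ti [hti [h2 h3]]] := disc s t h hnb.
have [p [hp ep]] := h1 ti hti; exists p; split => //; rewrite /nnle ep; split => //.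
Qed.

Definition Ps := proj1_sig (constructive_indefinite_description _ Ps_ex).
Lemma Ps_0 : exists p0, List.In p0 Ps /\ proj1_sig p0 = 0%R.
Proof. exact: (proj1 (proj2_sig (constructive_indefinite_description _ Ps_ex))). Qed.
Lemma Ps_disc (s t : nnR) (h : nnle s t) : ~ bijective (@pmap X _ _ h) ->
    exists p, List.In p Ps /\ (proj1_sig s < proj1_sig p)%R /\ nnle p t.
Proof. exact: (proj2 (proj2 (proj2_sig (constructive_indefinite_description _ Ps_ex))) s t h). Qed.

Lemma sample_max (t : nnR) : exists p, List.In p Ps /\ exists hpt : nnle p t,
  (forall q, List.In q Ps -> nnle q t -> nnle q p) /\ bijective (@pmap X _ _ hpt).
Proof.
have [p [hp [hpt hmax]]] : exists p, List.In p Ps /\ nnle p t /\ forall q, List.In q Ps -> nnle q t -> nnle q p.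
  apply: list_max; have [p0 [hp0 e0]] := Ps_0; exists p0; split => //.
  rewrite /nnle e0; exact: (proj2_sig t).
exists p; split => //; exists hpt; split => //.
apply: NNPP => hnb; have [q [hq [h1 h2]]] := Ps_disc hnb.
have := hmax q hq h2; rewrite /nnle; lra.
Qed.

Definition pt (t : nnR) : nnR := proj1_sig (constructive_indefinite_description _ (sample_max t)).
Lemma pt_Ps t : List.In (pt t) Ps.
Proof. by case: (proj2_sig (constructive_indefinite_description _ (sample_max t))). Qed.
Lemma pt_le t : nnle (pt t) t.
Proof. by case: (proj2_sig (constructive_indefinite_description _ (sample_max t))) => _ [h _]. Qed.
Lemma pt_max t q : List.In q Ps -> nnle q t -> nnle q (pt t).
Proof. by case: (proj2_sig (constructive_indefinite_description _ (sample_max t))) => _ [h [H _]]; apply: H. Qed.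
Lemma pt_bij t : bijective (@pmap X _ _ (pt_le t)).
Proof.
case: (proj2_sig (constructive_indefinite_description _ (sample_max t))) => _ [h [_ H]].
exact: pbij_irr H.
Qed.
Definition pre t (v : X t) : X (pt t) := epsilon (inhabits 0) (fun z => pmap (pt_le t) z = v).
Lemma pre_spec t v : pmap (pt_le t) (pre v) = v.
Proof.
rewrite /pre; apply: (epsilon_spec _ (fun z => pmap (pt_le t) z = v)).
case: (pt_bij t) => g _ hg; by exists (g v).
Qed.
Lemma pt_inj t (z z' : X (pt t)) : pmap (pt_le t) z = pmap (pt_le t) z' -> z = z'.
Proof. by move=> E; apply: (bij_inj (pt_bij t)). Qed.

Lemma factorA (f : pmor X L) : exists i (g : pmor X (dob D i)), forall t x, io i t (g t x) = f t x.
Proof.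
have [i Hi] : exists i, forall p, List.In p Ps -> forall n, (n < size (bas p))%nat ->
    exists y : dob D i p, io i p y = f p (bas p)`_n.
  apply: (@fin_up _ (fun p i => forall n, (n < size (bas p))%nat -> exists y : dob D i p, io i p y = f p (bas p)`_n)).
    move=> p i j u H n hn; have [y hy] := H n hn; exists (dm (D:=D) u y); by rewrite io_dm.
  move=> p _.
  have [i Hi] := @fin_up _ (fun n i => (n < size (bas p))%nat -> exists y : dob D i p, io i p y = f p (bas p)`_n)
     (iota 0 (size (bas p))) ltac:(move=> n i j u H hn; have [y hy] := H hn; exists (dm (D:=D) u y); by rewrite io_dm)
     ltac:(move=> n _; have [i [x hx]] := colim_P1 fC cL (f p (bas p)`_n); by exists i => _; exists x).
  by exists i => n hn; exact: Hi n (In_iota hn) hn.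
pose lift p n : dob D i p := epsilon (inhabits 0) (fun y => io i p y = f p (bas p)`_n).
have lift_spec : forall p, List.In p Ps -> forall n, (n < size (bas p))%nat -> io i p (lift p n) = f p (bas p)`_n.
  move=> p hp n hn; exact: (epsilon_spec _ (fun y => io i p y = f p (bas p)`_n) (Hi p hp n hn)).
pose g0 p : X p -> dob D i p := bmap (bas p) (lift p).
have g0lin : forall p, linear (g0 p).
  move=> p; rewrite /g0; have H := bmap_lin (lift p) (@bas_free p) (@bas_span p); exact H.
have g0f : forall p, List.In p Ps -> forall v, io i p (g0 p v) = f p v.
  move=> p hp; exact: (bmap_post (@bas_free p) (@bas_span p) (@mcomp_linear _ _ (io i) p) (@mcomp_linear _ _ f p) (lift_spec p hp)).
have [k [u Hu]] : exists k (u : hom i k), forall pq, List.In pq (list_prod Ps Ps) ->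
   forall (h : nnle pq.1 pq.2) n, (n < size (bas pq.1))%nat ->
   dm (D:=D) u (g0 pq.2 (pmap h (bas pq.1)`_n)) = dm (D:=D) u (pmap h (g0 pq.1 (bas pq.1)`_n)).
  apply: fin_eq.
    by move=> [p q] k k' u w H h n hn; rewrite !dm_comp H.
  move=> [p q] /in_prod_iff [hp hq] /=.
  case: (classic (nnle p q)) => [h0|hn0]; last by exists i, (cid i) => h; case: hn0.
  have [k [u Hk]] := @fin_eq _ i (fun n k u => (n < size (bas p))%nat ->
      dm (D:=D) u (g0 q (pmap h0 (bas p)`_n)) = dm (D:=D) u (pmap h0 (g0 p (bas p)`_n)))
     (iota 0 (size (bas p))) ltac:(by move=> n k k' u w H hn; rewrite !dm_comp H)
     ltac:(move=> n _; have [k [u E]] := eq_later (x := g0 q (pmap h0 (bas p)`_n)) (y := pmap h0 (g0 p (bas p)`_n)) ltac:(by rewrite g0f // mcomp_nat mcomp_nat g0f); by exists k, u => _).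
  exists k, u => h n hn; rewrite (proof_irrelevance _ h h0); exact: Hk n (In_iota hn) hn.
pose g1 p (v : X p) : dob D k p := dm (D:=D) u (g0 p v).
have g1lin : forall p, linear (g1 p).
  move=> p; apply: linear_comp_aux; [exact: (@mcomp_linear _ _ (dmap D u) p)|exact: g0lin].
have g1f : forall p, List.In p Ps -> forall v, io k p (g1 p v) = f p v.
  by move=> p hp v; rewrite /g1 io_dm g0f.
have g1c : forall p q, List.In p Ps -> List.In q Ps -> forall (h : nnle p q) v,
    g1 q (pmap h v) = pmap h (g1 p v).
  move=> p q hp hq h; apply: (lin_agree (b := bas p)).
  - apply: linear_comp_aux; [exact: g1lin|exact: pmap_linear].
  - apply: linear_comp_aux; [exact: pmap_linear|exact: g1lin].
  - exact: (@bas_span p).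
  - move=> n hn; rewrite /g1 -dm_nat.
    exact: (Hu (p, q) (proj2 (in_prod_iff _ _ _ _) (conj hp hq)) h n hn).
pose g t (v : X t) : dob D k t := pmap (pt_le t) (g1 (pt t) (pre v)).
have key : forall t q, List.In q Ps -> forall (hqt : nnle q t) z, g t (pmap hqt z) = pmap hqt (g1 q z).
  move=> t q hq hqt z; have hqp := pt_max hq hqt.
  have E : pre (pmap hqt z) = pmap hqp z.
    apply: pt_inj; rewrite pre_spec (pmap_ct hqp (pt_le t)); exact: pmap_pi.
  by rewrite /g E (g1c _ _ hq (pt_Ps t)) (pmap_ct hqp (pt_le t)); apply: pmap_pi.
have glin : forall t, linear (g t).
  move=> t a v w; rewrite -[v]pre_spec -[w]pre_spec -(pmap_linear (pt_le t)).
  by rewrite !(key t (pt t) (pt_Ps t)) g1lin pmap_linear.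
have gnat : forall s t (h : nnle s t) v, g t (pmap h v) = pmap h (g s v).
  move=> s t h v; rewrite -[v]pre_spec (pmap_ct (pt_le s) h) !(key _ (pt s) (pt_Ps s)).
  by rewrite (pmap_ct (pt_le s) h); apply: pmap_pi.
exists k, (PMor glin gnat) => t v /=.
by rewrite -[v]pre_spec (key _ _ (pt_Ps t)) mcomp_nat (g1f _ (pt_Ps t)) mcomp_nat.
Qed.

Lemma factorB i (g g' : pmor X (dob D i)) : (forall t x, io i t (g t x) = io i t (g' t x)) ->
  exists k (u : hom i k), forall t x, dm (D:=D) u (g t x) = dm (D:=D) u (g' t x).
Proof.
move=> H.
have [k [u Hu]] : exists k (u : hom i k), forall p, List.In p Ps -> forall n, (n < size (bas p))%nat ->
    dm (D:=D) u (g p (bas p)`_n) = dm (D:=D) u (g' p (bas p)`_n).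
  apply: fin_eq.
    by move=> p k k' u w Hp n hn; rewrite !dm_comp Hp.
  move=> p _.
  have [k [u Hk]] := @fin_eq _ i (fun n k u => (n < size (bas p))%nat ->
      dm (D:=D) u (g p (bas p)`_n) = dm (D:=D) u (g' p (bas p)`_n)) (iota 0 (size (bas p)))
    ltac:(by move=> n k k' u w Hp hn; rewrite !dm_comp Hp)
    ltac:(move=> n _; have [k [u E]] := eq_later (H p (bas p)`_n); by exists k, u => _).
  by exists k, u => n hn; exact: Hk n (In_iota hn) hn.
exists k, u => t x.
rewrite -[x]pre_spec !mcomp_nat !dm_nat.
congr (pmap _ _).
apply: (lin_agree (f1 := fun z => dm (D:=D) u (g (pt t) z)) (f2 := fun z => dm (D:=D) u (g' (pt t) z)) (b := bas (pt t))).
- apply: linear_comp_aux; [exact: (@mcomp_linear _ _ (dmap D u) (pt t))|exact: mcomp_linear].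
- apply: linear_comp_aux; [exact: (@mcomp_linear _ _ (dmap D u) (pt t))|exact: mcomp_linear].
- exact: (@bas_span (pt t)).
- move=> n hn; exact: Hu (pt_Ps t) n hn.
Qed.

Lemma compact_of_tame : @hom_cocone_is_colimit X C D L io.
Proof.
split.
  move=> i j u g; apply: pmor_eq => t x /=; exact: (io_dm u (g t x)).
move=> Z c hc.
have W : forall i (g : pmor X (dob D i)) j (g' : pmor X (dob D j)),
    (forall t x, io i t (g t x) = io j t (g' t x)) -> c i g = c j g'.
  move=> i g j g' H.
  have [k [a [b _]]] := fdir fC i j.
  have H' : forall t x, io k t (pcomp (dmap D a) g t x) = io k t (pcomp (dmap D b) g' t x).
    move=> t x /=; have E1 := io_dm a (g t x); have E2 := io_dm b (g' t x).
    rewrite /dm in E1 E2; by rewrite E1 E2 H.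
  have [m [u Hu]] := factorB H'.
  rewrite -(hc i k a g) -(hc j k b g') -(hc k m u) -(hc k m u (pcomp (dmap D b) g')).
  congr (c m _); apply: pmor_eq => t x /=; exact: Hu.
have fA : forall f : pmor X L, exists p : {i : ob C & pmor X (dob D i)},
    forall t x, io (projT1 p) t (projT2 p t x) = f t x.
  move=> f; have [i [g Hg]] := factorA f; by exists (existT _ i g).
pose fac f := proj1_sig (constructive_indefinite_description _ (fA f)).
have fac_spec : forall f t x, io (projT1 (fac f)) t (projT2 (fac f) t x) = f t x.
  move=> f; exact: (proj2_sig (constructive_indefinite_description _ (fA f))).
exists (fun f => c (projT1 (fac f)) (projT2 (fac f))); split.
  move=> i g; apply: W => t x; by rewrite fac_spec.
move=> h' H f.
have E : f = pcomp (io (projT1 (fac f))) (projT2 (fac f)).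
  apply: pmor_eq => t x /=; by rewrite fac_spec.
by rewrite {1}E H.
Qed.

End WithX. End Main.

End MP8.
Import MP8.

Theorem mainTheorem13 (X : pmod) : compact X <-> (tame X /\ finite_type X).
Proof.
split.
  move=> cX; split; [exact: compact_tame cX|exact: compact_ft cX].
case=> tX fX C D fC L io cL.
exact: (compact_of_tame fC cL tX fX).
Qed.
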